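(* For $k\in\mathbb{Z}_{\geq 0}$ let $!k=k!\sum_{\ell=0}^{k}\frac{(-1)^{\ell}}{\ell!}$ denote the $k$-th derangement number. Consider the formal series $$S_{\gamma}=\sum_{k=1}^{\infty}\frac{(-1)^{k}\,(!k)}{k},\qquad S_{\delta}=\sum_{k=1}^{\infty}(-1)^{k-1}(k-1)!,$$ and, for $\alpha\in\mathbb{R}$, the formal series $S(\alpha)=S_{\gamma}+\alpha S_{\delta}$, i.e. the series $\sum_{k=1}^{\infty}\left[\frac{(-1)^{k}\,(!k)}{k}+\alpha(-1)^{k-1}(k-1)!\right]$. Then $S(\alpha)$ is a conventionally convergent series if and only if $\alpha=1/e$.
   Context: Both $S_{\gamma}$ and $S_{\delta}$ are divergent series (in the conventional sense); they are Borel-summable to the Euler–Mascheroni constant $\gamma$ and the Euler–Gompertz constant $\delta=\int_0^\infty e^{-t}/(t+1)\,dt$, respectively. ''Conventionally convergent'' means convergent as an ordinary series of real numbers (convergence of the sequence of partial sums), with the linear combination $S_\gamma+\alpha S_\delta$ formed term by term. *)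

(* Defs.v *)
From Stdlib Require Import Reals.
From Coquelicot Require Import Coquelicot.
Open Scope R_scope.

Definition derangement (k : nat) : R :=
  INR (Factorial.fact k) * sum_f_R0 (fun l => (-1) ^ l / INR (Factorial.fact l)) k.

Definition s_gamma_term (k : nat) : R := (-1) ^ k * derangement k / INR k.

Definition s_delta_term (k : nat) : R := (-1) ^ (k - 1) * INR (Factorial.fact (k - 1)).

(* term-by-term combination S(alpha) = S_gamma + alpha S_delta, reindexed so
   that index n corresponds to k = n+1 *)
Definition S_alpha_term (alpha : R) (n : nat) : R :=
  s_gamma_term (S n) + alpha * s_delta_term (S n).

(* Main.v *)
Require Import Defs.
From Stdlib Require Import Reals Lra Lia.
From Coquelicot Require Import Coquelicot.
Open Scope R_scope.

Definition D (k : nat) : R := sum_f_R0 (fun l => (-1) ^ l / INR (Factorial.fact l)) k.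

Lemma D_cv : Un_cv D (/ exp 1).
Proof.
  rewrite <- exp_Ropp. unfold exp. destruct (exist_exp (- (1))) as [x e]. simpl.
  intros eps Heps. destruct (e eps Heps) as [N HN]. exists N. intros n Hn.
  unfold D. rewrite (sum_eq _ (fun i => / INR (Factorial.fact i) * (- (1)) ^ i)).
  - apply HN; auto.
  - intros; replace (- (1)) with (-1) by ring; unfold Rdiv; ring.
Qed.

Lemma inv_fact_decr : Un_decreasing (fun i:nat => / INR (Factorial.fact i)).
Proof.
  unfold Un_decreasing; intros.
  apply Rinv_le_contravar. apply INR_fact_lt_0.
  apply le_INR; apply Factorial.fact_le; apply Nat.le_succ_diag_r.
Qed.

Lemma inv_fact_cv : Un_cv (fun i:nat => / INR (Factorial.fact i)) 0.
Proof.
  assert (H0 := cv_speed_pow_fact 1). intros eps He. destruct (H0 eps He) as [N HN].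
  exists N. intros n Hn. specialize (HN n Hn). rewrite pow1 in HN. unfold Rdiv in HN.
  rewrite Rmult_1_l in HN. exact HN.
Qed.

Lemma D_tg : forall k, D k = sum_f_R0 (tg_alt (fun i:nat => / INR (Factorial.fact i))) k.
Proof. intros. unfold D, tg_alt. apply sum_eq. intros; unfold Rdiv; ring. Qed.

Lemma D_alt : forall N, D (S (2*N)) <= / exp 1 <= D (2*N).
Proof.
  intros. rewrite !D_tg. apply alternated_series_ineq.
  apply inv_fact_decr. apply inv_fact_cv.
  intros e He. destruct (D_cv e He) as [M HM]. exists M. intros n Hn.
  rewrite <- D_tg. auto.
Qed.

Lemma D_S : forall k, D (S k) = D k + (-1)^(S k) / INR (Factorial.fact (S k)).
Proof. intros; reflexivity. Qed.

Lemma D_bound : forall k, Rabs (D k - / exp 1) <= / INR (Factorial.fact (S k)).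
Proof.
  intros k. destruct (Nat.Even_or_Odd k) as [[N HN]|[N HN]]; subst k.
  - destruct (D_alt N) as [H1 H2]. rewrite D_S in H1.
    rewrite pow_1_odd in H1.
    rewrite Rabs_right by lra. lra.
  - destruct (D_alt (S N)) as [H1 H2].
    replace (2 * S N)%nat with (S (2*N+1)) in H2 by lia.
    rewrite D_S in H2. replace (S (2*N+1)) with (2 * (N+1))%nat in H2 by lia.
    rewrite pow_1_even in H2. replace (2 * (N+1))%nat with (S (2*N+1)) in H2 by lia.
    destruct (D_alt N) as [H3 _]. replace (S (2*N)) with (2*N+1)%nat in H3 by lia.
    rewrite Rabs_left1 by lra. unfold Rdiv in H2; lra.
Qed.

Lemma term_eq (alpha : R) n :
  S_alpha_term alpha n = (-1)^(S n) * INR (Factorial.fact n) * (D (S n) - alpha).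
Proof.
  unfold S_alpha_term, s_gamma_term, s_delta_term, derangement.
  replace (S n - 1)%nat with n by lia. fold (D (S n)).
  rewrite fact_simpl, mult_INR. simpl pow.
  assert (INR (S n) <> 0) by (apply not_0_INR; lia).
  field. auto.
Qed.

Lemma abs_term (alpha : R) n :
  Rabs (S_alpha_term alpha n) = INR (Factorial.fact n) * Rabs (D (S n) - alpha).
Proof.
  rewrite term_eq, !Rabs_mult, pow_1_abs, Rabs_right. ring.
  apply Rle_ge, pos_INR.
Qed.

Lemma telesc : ex_series (fun n => / ((INR n + 1) * (INR n + 2))).
Proof.
  exists 1. change (is_lim_seq (sum_n (fun n => / ((INR n + 1) * (INR n + 2)))) 1).
  apply is_lim_seq_ext with (fun n => 1 - / (INR n + 2)).
  - intros n. induction n.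
    + rewrite sum_O. simpl. field.
    + rewrite sum_Sn, <- IHn. rewrite S_INR. change plus with Rplus.
      assert (0 <= INR n) by apply pos_INR. field. split; lra.
  - replace (Finite 1) with (Rbar_minus 1 0) by (simpl; f_equal; ring).
    apply is_lim_seq_minus'. apply is_lim_seq_const.
    replace (Finite 0) with (Rbar_inv p_infty) by reflexivity.
    apply is_lim_seq_inv. 
    + apply is_lim_seq_plus with p_infty 2. apply is_lim_seq_INR. apply is_lim_seq_const.
      reflexivity.
    + discriminate.
Qed.

Theorem proposition1 (alpha : R) :
  ex_series (S_alpha_term alpha) <-> alpha = / exp 1.
Proof.
  split.
  - intros Hs. apply ex_series_lim_0 in Hs.
    apply is_lim_seq_abs_0 in Hs.
    assert (H0 : is_lim_seq (fun n => Rabs (D (S n) - alpha)) 0).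
    { apply is_lim_seq_le_le with (fun _ => 0) (fun n => Rabs (S_alpha_term alpha n)).
      - intros n. split. apply Rabs_pos. rewrite abs_term.
        rewrite <- (Rmult_1_l (Rabs _)) at 1. apply Rmult_le_compat_r. apply Rabs_pos.
        apply (le_INR 1). apply Factorial.lt_O_fact.
      - apply is_lim_seq_const.
      - exact Hs. }
    apply is_lim_seq_abs_0 in H0.
    assert (H1 : is_lim_seq (fun n => D (S n) - alpha) (/ exp 1 - alpha)).
    { apply is_lim_seq_Reals. intros e He. destruct (D_cv e He) as [N HN].
      exists N. intros n Hn. unfold Rdist in *.
      replace (D (S n) - alpha - (/ exp 1 - alpha)) with (D (S n) - / exp 1) by ring.
      apply HN. lia. }
    apply is_lim_seq_unique in H0. apply is_lim_seq_unique in H1.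
    rewrite H0 in H1. injection H1. intros. lra.
  - intros ->. apply (@ex_series_le R_AbsRing R_CompleteNormedModule) with (2 := telesc).
    intros n. change norm with Rabs. simpl. rewrite abs_term.
    eapply Rle_trans. apply Rmult_le_compat_l. apply pos_INR. apply D_bound.
    rewrite !fact_simpl, !mult_INR, !S_INR.
    assert (0 < INR (Factorial.fact n)) by apply INR_fact_lt_0.
    assert (0 <= INR n) by apply pos_INR.
    right. field. repeat split; lra.
Qed.
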